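(* Let $\mathcal{H}$ be a complex Hilbert space. Then $w_{\Omega}(T) = \sqrt{2}\,w(T)$ for all $T\in\mathbb{B}(\mathcal{H})$.
   Context: $\mathbb{B}(\mathcal{H})$ is the algebra of bounded linear operators on $\mathcal{H}$, $\|\cdot\|$ the usual operator norm, and $w(T)=\sup\{|\langle Tx,x\rangle|:\|x\|=1\}$ the numerical radius. Dragomir's norm is $\Omega(T)=\sup\{\|\zeta T+\eta T^*\|:\ \zeta,\eta\in\mathbb{C},\ |\zeta|^2+|\eta|^2\le 1\}$. For $A\in\mathbb{B}(\mathcal{H})$, ${\rm Re}(A)=\frac{A+A^*}{2}$, and $w_\Omega(T)=\sup_{\theta\in\mathbb{R}}\Omega\big({\rm Re}(e^{i\theta}T)\big)$. *)

(* Defs.v *)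
From HB Require Import structures.
From mathcomp Require Import all_boot all_order all_algebra.
From mathcomp Require Import complex.
From mathcomp Require Import all_classical all_reals trigo.
Set Implicit Arguments. Unset Strict Implicit. Unset Printing Implicit Defensive.
Import Order.TTheory GRing.Theory Num.Theory.
Local Open Scope ring_scope.
Local Open Scope complex_scope.
Local Open Scope classical_set_scope.

Definition cabs (R : realType) (z : R[i]) : R := complex.Re `|z|.

Section Hilbert.
Variables (R : realType) (V : lmodType R[i]) (ip : V -> V -> R[i]).

Definition is_inner_product : Prop :=
  [/\ (forall (a : R[i]) (x y z : V), ip (a *: x + y) z = a * ip x z + ip y z),
      (forall x y : V, ip y x = (ip x y)^*),
      (forall x : V, 0 <= ip x x) &
      (forall x : V, ip x x = 0 -> x = 0)].

Definition hnorm (x : V) : R := Num.sqrt (complex.Re (ip x x)).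

Definition hcomplete : Prop :=
  forall u : nat -> V,
    (forall e : R, 0 < e -> exists N : nat, forall m n : nat,
        (N <= m)%N -> (N <= n)%N -> hnorm (u m - u n) < e) ->
    exists l : V, forall e : R, 0 < e -> exists N : nat, forall n : nat,
        (N <= n)%N -> hnorm (u n - l) < e.

Definition is_hilbert : Prop := is_inner_product /\ hcomplete.

Definition bounded_op (T : V -> V) : Prop :=
  (forall (a : R[i]) (x y : V), T (a *: x + y) = a *: T x + T y) /\
  exists M : R, forall x : V, hnorm (T x) <= M * hnorm x.

Definition is_adjoint (T S : V -> V) : Prop :=
  forall x y : V, ip (T x) y = ip x (S y).

Definition opnorm (T : V -> V) : R :=
  sup [set hnorm (T x) | x in [set x : V | hnorm x <= 1]].

Definition numrad (T : V -> V) : R :=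
  sup [set cabs (ip (T x) x) | x in [set x : V | hnorm x = 1]].

(* Dragomir's norm Omega(T), where Tstar is the adjoint T^* of T *)
Definition Omega (T Tstar : V -> V) : R :=
  sup [set opnorm (fun x => zw.1 *: T x + zw.2 *: Tstar x)
      | zw in [set zw : R[i] * R[i] | cabs zw.1 ^+ 2 + cabs zw.2 ^+ 2 <= 1]].

Definition expi (t : R) : R[i] := (cos t +i* sin t)%C.

(* Re(e^{i t} T) = (e^{i t} T + e^{-i t} Tstar) / 2, Tstar the adjoint of T *)
Definition ReOp (T Tstar : V -> V) (t : R) : V -> V :=
  fun x => 2^-1 *: (expi t *: T x + expi (- t) *: Tstar x).

(* w_Omega(T) = sup_t Omega(Re(e^{i t} T)); Re(e^{it}T) is selfadjoint,
   so its adjoint is itself *)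
Definition wOmega (T Tstar : V -> V) : R :=
  sup [set Omega (ReOp T Tstar t) (ReOp T Tstar t) | t in [set: R]].

End Hilbert.

(* Main.v *)
Require Import Defs.
From HB Require Import structures.
From mathcomp Require Import all_boot all_order all_algebra.
From mathcomp Require Import complex.
From mathcomp Require Import all_classical all_reals trigo.
From mathcomp Require Import ring lra.
Import Order.TTheory GRing.Theory Num.Theory.
Local Open Scope ring_scope.
Local Open Scope complex_scope.


Module Part1.
Local Open Scope ring_scope.
Local Open Scope complex_scope.
Set Implicit Arguments. Unset Strict Implicit.
Section CHelp.
Variable R : realType.
Implicit Types (z w : R[i]) (r t : R).

Lemma cabsE z : cabs z = Num.sqrt (complex.Re z ^+ 2 + complex.Im z ^+ 2).
Proof. by rewrite /cabs normc_def. Qed.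

Lemma cabs_ge0 z : 0 <= cabs z.
Proof. by rewrite cabsE sqrtr_ge0. Qed.

Lemma Re_le_cabs z : `|complex.Re z| <= cabs z.
Proof.
rewrite cabsE -sqrtr_sqr ler_wsqrtr // lerDl sqr_ge0 //.
Qed.

Lemma cabsM z w : cabs (z * w) = cabs z * cabs w.
Proof.
case: z => a b; case: w => c d; rewrite !cabsE -sqrtrM /=; last by rewrite addr_ge0 ?sqr_ge0.
congr Num.sqrt; ring.
Qed.

Lemma cabs_expi t : cabs (expi t) = 1.
Proof. by rewrite cabsE /expi /= cos2Dsin2 sqrtr1. Qed.

Lemma cabsJ z : cabs ((conjc z)) = cabs z.
Proof. by case: z => a b; rewrite !cabsE /= sqrrN. Qed.

Lemma cabs_real r : cabs (r%:C) = `|r|.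
Proof. by rewrite cabsE /= expr0n /= addr0 sqrtr_sqr. Qed.

Lemma cabsD z w : cabs (z + w) <= cabs z + cabs w.
Proof.
have := ler_normD z w; rewrite lecE => /andP[_]; rewrite /cabs.
by case: `|z|; case: `|w|.
Qed.

Lemma cReD z w : complex.Re (z + w) = complex.Re z + complex.Re w.
Proof. by case: z; case: w. Qed.
Lemma cReN z : complex.Re (- z) = - complex.Re z.
Proof. by case: z. Qed.
Lemma cReB z w : complex.Re (z - w) = complex.Re z - complex.Re w.
Proof. by rewrite cReD cReN. Qed.
Lemma cReJ z : complex.Re ((conjc z)) = complex.Re z.
Proof. by case: z. Qed.
Lemma cReMr r z : complex.Re (r%:C * z) = r * complex.Re z.
Proof. by case: z => a b /=; rewrite mul0r subr0. Qed.
Lemma cReMJ z : complex.Re (z * (conjc z)) = cabs z ^+ 2.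
Proof.
case: z => a b; rewrite cabsE sqr_sqrtr /=; last by rewrite addr_ge0 ?sqr_ge0.
ring.
Qed.

Lemma expiN t : expi (- t) = (conjc (expi t)).
Proof. by rewrite /expi cosN sinN. Qed.

Lemma phase z : exists t, complex.Re (expi t * z) = cabs z.
Proof.
case: z => a b /=.
set r := cabs (a +i* b).
have hr2 : r ^+ 2 = a ^+ 2 + b ^+ 2.
  by rewrite /r cabsE /= sqr_sqrtr // addr_ge0 ?sqr_ge0.
have hr0 : 0 <= r by exact: cabs_ge0.
have [r0|rp] := eqVneq r 0.
  have a0 : a = 0 by move: hr2; rewrite r0 expr0n /=; nra.
  have b0 : b = 0 by move: hr2; rewrite r0 expr0n /=; nra.
  by exists 0; rewrite r0 a0 b0 /= !mulr0 subr0.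
have rpos : 0 < r by rewrite lt_neqAle eq_sym rp hr0.
set y := a / r.
have hy : -1 <= y <= 1.
  have : y ^+ 2 <= 1.
    rewrite /y expr_div_n ler_pdivrMr ?exprn_gt0 // mul1r hr2; nra.
  move=> h; apply/andP; split; nra.
have s2 : Num.sqrt (1 - y ^+ 2) = `|b / r|.
  rewrite -sqrtr_sqr; congr Num.sqrt.
  rewrite /y !expr_div_n; apply/eqP; rewrite subr_eq -mulrDl addrC -hr2 divff //.
  by rewrite expf_neq0.
have cy : cos (acos y) = y by rewrite acosK // in_itv /=.
have sy : sin (acos y) = `|b / r| by rewrite sin_acos.
have key : r = (a ^+ 2 + b ^+ 2) / r by rewrite -hr2 expr2 mulfK.
have [b0|b0] := lerP b 0.
  exists (acos y); rewrite /expi /= cy sy ler0_norm; last by rewrite pmulr_lle0 ?invr_gt0.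
  by rewrite [RHS]key /y; field.
exists (- acos y); rewrite /expi /= cosN sinN cy sy gtr0_norm; last by rewrite divr_gt0.
  by rewrite [RHS]key /y; field.
Qed.

End CHelp.

End Part1.
Import Part1.

Module Part2.
Local Open Scope ring_scope.
Local Open Scope complex_scope.
Set Implicit Arguments. Unset Strict Implicit.
Section IP.
Variables (R : realType) (V : lmodType R[i]) (ip : V -> V -> R[i]).
Hypothesis hip : is_inner_product ip.

Lemma conjD (z w : R[i]) : (conjc (z + w)) = (conjc z) + (conjc w).
Proof. by case: z; case: w => ? ? ? ? /=; rewrite opprD. Qed.
Lemma conjM (z w : R[i]) : (conjc (z * w)) = (conjc z) * (conjc w).
Proof. case: z; case: w => ? ? ? ? /=; congr Complex; ring. Qed.
Lemma conjN1 : (conjc (-1 : R[i])) = -1.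
Proof. by rewrite /= oppr0. Qed.

Definition n2 (x : V) : R := complex.Re (ip x x).

Lemma ipDZ a x y z : ip (a *: x + y) z = a * ip x z + ip y z.
Proof. by case: hip. Qed.
Lemma ipJ x y : ip y x = (conjc (ip x y)).
Proof. by case: hip. Qed.
Lemma ipD_l x y z : ip (x + y) z = ip x z + ip y z.
Proof. by rewrite -[x]scale1r ipDZ mul1r scale1r. Qed.
Lemma ip0_l z : ip 0 z = 0.
Proof.
have h := ipD_l 0 0 z; rewrite addr0 in h.
by apply: (@addrI _ (ip 0 z)); rewrite addr0 -h.
Qed.
Lemma ipZ_l a x z : ip (a *: x) z = a * ip x z.
Proof. by rewrite -[a *: x]addr0 ipDZ ip0_l addr0. Qed.
Lemma ipN_l x z : ip (- x) z = - ip x z.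
Proof. by rewrite -scaleN1r ipZ_l mulN1r. Qed.
Lemma ipB_l x y z : ip (x - y) z = ip x z - ip y z.
Proof. by rewrite ipD_l ipN_l. Qed.
Lemma ipD_r x y z : ip z (x + y) = ip z x + ip z y.
Proof. by rewrite ipJ ipD_l conjD -!ipJ. Qed.
Lemma ipZ_r a x z : ip z (a *: x) = (conjc a) * ip z x.
Proof. by rewrite ipJ ipZ_l conjM -ipJ. Qed.
Lemma ip0_r z : ip z 0 = 0.
Proof. by rewrite ipJ ip0_l conjc0. Qed.
Lemma ipB_r x y z : ip z (x - y) = ip z x - ip z y.
Proof. by rewrite ipD_r -scaleN1r ipZ_r conjN1 mulN1r. Qed.

Lemma ip_self x : ip x x = (n2 x)%:C.
Proof.
have h : 0 <= ip x x by case: hip.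
by rewrite [LHS]complexE (ger0_Im h) mulr0 addr0.
Qed.
Lemma n2_ge0 x : 0 <= n2 x.
Proof. have h : 0 <= ip x x by case: hip. by move: h; rewrite ip_self lecR. Qed.
Lemma n2_eq0 x : n2 x = 0 -> x = 0.
Proof. move=> h; case: hip => _ _ _; apply; by rewrite ip_self h. Qed.
Lemma hnorm_sq x : hnorm ip x ^+ 2 = n2 x.
Proof. by rewrite /hnorm sqr_sqrtr // n2_ge0. Qed.
Lemma hnorm_ge0 x : 0 <= hnorm ip x.
Proof. exact: sqrtr_ge0. Qed.
Lemma cReipJ x y : complex.Re (ip y x) = complex.Re (ip x y).
Proof. by rewrite ipJ cReJ. Qed.
Lemma n2D x y : n2 (x + y) = n2 x + n2 y + 2 * complex.Re (ip x y).
Proof.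
rewrite /n2 ipD_l !ipD_r !cReD (cReipJ x y); ring.
Qed.
Lemma n2B x y : n2 (x - y) = n2 x + n2 y - 2 * complex.Re (ip x y).
Proof.
rewrite /n2 ipB_l !ipB_r !cReB (cReipJ x y); ring.
Qed.
Lemma n2Z a x : n2 (a *: x) = cabs a ^+ 2 * n2 x.
Proof.
rewrite /n2 ipZ_l ipZ_r -/(n2 x) mulrA ip_self -cReMJ.
by case: (a * (conjc a)) => p q /=; rewrite mulr0 subr0.
Qed.
Lemma hnormZ a x : hnorm ip (a *: x) = cabs a * hnorm ip x.
Proof.
rewrite /hnorm -/(n2 _) n2Z sqrtrM ?sqr_ge0 // sqrtr_sqr ger0_norm //.
exact: cabs_ge0.
Qed.
Lemma n2Zr (s : R) x : n2 (s%:C *: x) = s ^+ 2 * n2 x.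
Proof. by rewrite n2Z cabs_real real_normK // num_real. Qed.
Lemma Reip_Zr (s : R) x y : complex.Re (ip x (s%:C *: y)) = s * complex.Re (ip x y).
Proof. by rewrite ipZ_r conjc_real cReMr. Qed.

Lemma cs_re u v : complex.Re (ip u v) <= hnorm ip u * hnorm ip v.
Proof.
set r := complex.Re (ip u v).
have key : forall s : R, 0 <= n2 u + s ^+ 2 * n2 v - 2 * s * r.
  move=> s; have := n2_ge0 (u - s%:C *: v).
  by rewrite n2B n2Zr Reip_Zr /r -mulrA.
have [rle|rgt] := lerP r 0.
  by apply: (le_trans rle); rewrite mulr_ge0 ?hnorm_ge0.
have [v0|vp] := eqVneq (n2 v) 0.
  by move: rgt; rewrite /r (n2_eq0 v0) ip0_r /= ltxx.
have vpos : 0 < n2 v by rewrite lt_neqAle eq_sym vp n2_ge0.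
have := key (r / n2 v).
have -> : n2 u + (r / n2 v) ^+ 2 * n2 v - 2 * (r / n2 v) * r = n2 u - r ^+ 2 / n2 v.
  by field; rewrite gt_eqF.
rewrite subr_ge0 ler_pdivrMr // => h.
rewrite -(ger0_norm (ltW rgt)) -sqrtr_sqr /hnorm -!/(n2 _) -sqrtrM ?n2_ge0 //.
by rewrite ler_wsqrtr.
Qed.

Lemma hnorm_le1 x : (hnorm ip x <= 1) = (n2 x <= 1).
Proof. by rewrite /hnorm -/(n2 x) -{1}sqrtr1 ler_sqrt. Qed.
Lemma hnorm_eq1 x : hnorm ip x = 1 -> n2 x = 1.
Proof. by move=> h; rewrite -hnorm_sq h expr1n. Qed.

End IP.

End Part2.
Import Part2.

Module Part3.
Local Open Scope ring_scope.
Local Open Scope complex_scope.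
Set Implicit Arguments. Unset Strict Implicit.
Local Open Scope classical_set_scope.
Section SupH.
Variable R : realType.
Lemma sup_le_of (T : Type) (A : set T) (f : T -> R) (b : R) :
  0 <= b -> (forall x, A x -> f x <= b) -> sup [set f x | x in A] <= b.
Proof.
move=> b0 hb; case: (pselect (exists x, A x)) => [[x0 Ax0]|nA].
  apply: ge_sup; first by exists (f x0); exists x0.
  by move=> y [x Ax <-]; exact: hb.
have -> : [set f x | x in A] = set0.
  by apply/seteqP; split => y //= [x Ax _]; exfalso; apply: nA; exists x.
by rewrite sup0.
Qed.
Lemma sup_le_ofE (T : Type) (A : set T) (f : T -> R) (b : R) x0 :
  A x0 -> (forall x, A x -> f x <= b) -> sup [set f x | x in A] <= b.
Proof.
move=> Ax0 hb; apply: ge_sup; first by exists (f x0); exists x0.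
by move=> y [x Ax <-]; exact: hb.
Qed.
Lemma le_sup_of (T : Type) (A : set T) (f : T -> R) (b : R) x0 :
  (forall x, A x -> f x <= b) -> A x0 -> f x0 <= sup [set f x | x in A].
Proof.
move=> hb Ax0; apply: ub_le_sup; last by exists x0.
by exists b => y [x Ax <-]; exact: hb.
Qed.

Lemma realCM (r s : R) : r%:C * s%:C = (r * s)%:C.
Proof. by rewrite -rmorphM. Qed.
Lemma realCD (r s : R) : r%:C + s%:C = (r + s)%:C.
Proof. by rewrite -rmorphD. Qed.
Lemma inv2C : (2^-1 : R[i]) = (2^-1 : R)%:C.
Proof. by rewrite fmorphV rmorph_nat. Qed.
Lemma cabs0 : cabs (0 : R[i]) = 0.
Proof. by rewrite -(rmorph0 (real_complex R)) cabs_real normr0. Qed.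
End SupH.

Section Main.
Variables (R : realType) (V : lmodType R[i]) (ip : V -> V -> R[i]).
Hypothesis hip : is_inner_product ip.
Variables (T Tstar : V -> V).
Hypothesis hT : bounded_op ip T.
Hypothesis hadj : is_adjoint ip T Tstar.

Local Notation hn := (hnorm ip).
Local Notation n2 := (n2 ip).

Lemma TDZ a x y : T (a *: x + y) = a *: T x + T y.
Proof. by case: hT. Qed.
Lemma T0 : T 0 = 0.
Proof.
have h := TDZ 1 0 0; rewrite !scale1r addr0 in h.
by apply: (@addrI _ (T 0)); rewrite addr0 -h.
Qed.
Lemma TD x y : T (x + y) = T x + T y.
Proof. by rewrite -[x]scale1r TDZ !scale1r. Qed.
Lemma TZ a x : T (a *: x) = a *: T x.
Proof. by rewrite -[a *: x]addr0 TDZ T0 addr0. Qed.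
Lemma TB x y : T (x - y) = T x - T y.
Proof. by rewrite TD -scaleN1r TZ scaleN1r. Qed.

Lemma hn0 : hn 0 = 0.
Proof. by rewrite /hnorm (ip0_l hip) sqrtr0. Qed.

Lemma hn_n2 x : (hn x = 1) <-> (n2 x = 1).
Proof.
split; first exact: hnorm_eq1.
by move=> h; rewrite /hnorm -/(n2 x) h sqrtr1.
Qed.

Definition W := numrad ip T.

Lemma unit_bound : exists M, forall u, n2 u = 1 -> cabs (ip (T u) u) <= M.
Proof.
case: hT => _ [M hM]; exists M => u hu.
have [t ht] := phase (ip (T u) u).
rewrite -ht -(ipZ_l hip).
apply: (le_trans (cs_re hip _ _)).
rewrite (hnormZ hip) cabs_expi mul1r.
have h1 : hn u = 1 by apply/hn_n2.
by rewrite h1 mulr1; apply: (le_trans (hM u)); rewrite h1 mulr1.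
Qed.

Lemma le_W u : n2 u = 1 -> cabs (ip (T u) u) <= W.
Proof.
move=> hu; have [M hM] := unit_bound.
apply: (@le_sup_of _ _ _ (fun x => cabs (ip (T x) x)) M u).
  by move=> x /= /hn_n2; exact: hM.
by apply/hn_n2.
Qed.

Lemma W_ge0 : 0 <= W.
Proof.
case: (pselect (exists u, hn u = 1)) => [[u /hn_n2 hu]|nU].
  exact: le_trans (cabs_ge0 _) (le_W hu).
rewrite /W /numrad.
have -> : [set cabs (ip (T x) x) | x in [set x | hn x = 1]] = set0.
  by apply/seteqP; split => y //= [x Ax _]; exfalso; apply: nU; exists x.
by rewrite sup0.
Qed.

Lemma quad_scale c u :
  cabs (ip (T (c *: u)) (c *: u)) = cabs c ^+ 2 * cabs (ip (T u) u).
Proof.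
by rewrite TZ (ipZ_l hip) (ipZ_r hip) !cabsM cabsJ mulrA expr2.
Qed.

Lemma quad_W z : cabs (ip (T z) z) <= W * n2 z.
Proof.
have [z0|zp] := eqVneq (n2 z) 0.
  by rewrite (n2_eq0 hip z0) T0 (ip0_l hip) cabs0 mulr_ge0 ?W_ge0 ?n2_ge0.
have h0 : 0 < hn z.
  by rewrite /hnorm sqrtr_gt0 lt_neqAle eq_sym zp n2_ge0.
set u := ((hn z)^-1)%:C *: z.
have zu : z = (hn z)%:C *: u.
  by rewrite /u scalerA realCM mulfV ?gt_eqF // scale1r.
have hu : n2 u = 1.
  by rewrite /u (n2Zr hip) -(hnorm_sq hip) exprVn mulVf // expf_neq0 // gt_eqF.
rewrite zu quad_scale (n2Zr hip) hu mulr1 cabs_real ger0_norm ?(ltW h0) //.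
rewrite [X in _ <= X]mulrC; apply: ler_wpM2l; [exact: sqr_ge0 | exact: le_W].
Qed.

Definition A t := ReOp T Tstar t.
Definition P t x y := complex.Re (expi t * ip (T x) y).

Lemma ReipA t x y : complex.Re (ip (A t x) y) = (P t x y + P t y x) / 2.
Proof.
rewrite /A /ReOp (ipZ_l hip) (ipD_l hip) !(ipZ_l hip) (ipJ hip y (Tstar x)) -hadj.
rewrite expiN -conjM inv2C cReMr cReD cReJ /P.
by rewrite mulrC.
Qed.

Lemma P_abs t z : `|P t z z| <= W * n2 z.
Proof.
apply: (le_trans (Re_le_cabs _)).
by rewrite cabsM cabs_expi mul1r quad_W.
Qed.

Lemma P_polar t x y :
  P t (x + y) (x + y) - P t (x - y) (x - y) = 2 * (P t x y + P t y x).
Proof.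
rewrite /P TD TB !(ipB_l hip) !(ipD_l hip) !(ipB_r hip) !(ipD_r hip).
rewrite !(mulrDr, mulrBr, mulrN) !(cReD, cReB, cReN); ring.
Qed.

Lemma A_bound t x : n2 x <= 1 -> hn (A t x) <= W.
Proof.
move=> hx; set v := A t x.
have [v0|vp] := eqVneq (n2 v) 0.
  by rewrite /hnorm -/(n2 v) v0 sqrtr0 W_ge0.
have h0 : 0 < hn v.
  by rewrite /hnorm sqrtr_gt0 lt_neqAle eq_sym vp n2_ge0.
set h := hn v.
set y := (h^-1)%:C *: v.
have hy : n2 y = 1.
  by rewrite /y (n2Zr hip) -(hnorm_sq hip) exprVn mulVf // expf_neq0 // gt_eqF.
have hre : complex.Re (ip v y) = h.
  by rewrite /y (Reip_Zr hip) -/(n2 v) -(hnorm_sq hip) -/h expr2 mulKf // gt_eqF.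
have key := P_polar t x y.
have e1 := P_abs t (x + y); have e2 := P_abs t (x - y).
have s := n2D hip x y; have d := n2B hip x y.
have hA := ReipA t x y; rewrite -/v hre in hA.
have W0 := W_ge0.
move: e1 e2; rewrite !ler_norml => /andP[e1 e1'] /andP[e2 e2'].
have hxW : W * n2 x <= W by rewrite -[X in _ <= X]mulr1 ler_wpM2l.
nra.
Qed.

Lemma opA_bound t : opnorm ip (A t) <= W.
Proof.
apply: sup_le_of; first exact: W_ge0.
by move=> x /=; rewrite (hnorm_le1 ip); exact: A_bound.
Qed.

Lemma unit_opA x : n2 x = 1 -> exists t, cabs (ip (T x) x) <= opnorm ip (A t).
Proof.
move=> hx; have [t ht] := phase (ip (T x) x); exists t.
have hP : cabs (ip (T x) x) = complex.Re (ip (A t x) x).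
  by rewrite ReipA -/(P t x x) -ht /P; field.
rewrite hP; apply: (le_trans (cs_re hip _ _)).
have h1 : hn x = 1 by apply/hn_n2.
rewrite h1 mulr1.
apply: (@le_sup_of _ _ _ (fun x => hn (A t x)) W x).
  by move=> z /=; rewrite (hnorm_le1 ip); exact: A_bound.
by rewrite /= h1.
Qed.

End Main.

Section Om.
Variables (R : realType) (V : lmodType R[i]) (ip : V -> V -> R[i]).
Hypothesis hip : is_inner_product ip.
Local Notation hn := (hnorm ip).

Lemma s2pos : 0 < Num.sqrt (2 : R).
Proof. by rewrite sqrtr_gt0. Qed.

Lemma cabs_sum_le (zw : R[i] * R[i]) :
  cabs zw.1 ^+ 2 + cabs zw.2 ^+ 2 <= 1 -> cabs (zw.1 + zw.2) <= Num.sqrt 2.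
Proof.
move=> h; apply: (le_trans (cabsD _ _)).
have p0 := cabs_ge0 zw.1; have q0 := cabs_ge0 zw.2.
have hs : (cabs zw.1 + cabs zw.2) ^+ 2 <= 2.
  have := sqr_ge0 (cabs zw.1 - cabs zw.2).
  move: h; set p := cabs zw.1; set q := cabs zw.2 => h h'.
  rewrite -[2]/(1 + 1 : R); nra.
rewrite -(ger0_norm (addr_ge0 p0 q0)) -sqrtr_sqr.
exact: ler_wsqrtr.
Qed.

Lemma elem_bound (B : V -> V) (zw : R[i] * R[i]) x :
  cabs zw.1 ^+ 2 + cabs zw.2 ^+ 2 <= 1 ->
  hn (zw.1 *: B x + zw.2 *: B x) <= Num.sqrt 2 * hn (B x).
Proof.
move=> h; rewrite -scalerDl (hnormZ hip).
apply: ler_wpM2r; [exact: hnorm_ge0 | exact: cabs_sum_le].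
Qed.

Lemma hn0' : hn 0 = 0.
Proof. by rewrite /hnorm (ip0_l hip) sqrtr0. Qed.

Lemma Omega_eq (B : V -> V) K : (forall x, hn x <= 1 -> hn (B x) <= K) ->
  Omega ip B B = Num.sqrt 2 * opnorm ip B.
Proof.
move=> hK.
have h01 : hn 0 <= 1 by rewrite hn0' ler01.
have Bub : forall x, hn x <= 1 -> hn (B x) <= opnorm ip B.
  move=> x hx.
  exact: (@le_sup_of _ _ [set x | hn x <= 1] (fun x => hn (B x)) K x hK hx).
have Bge0 : 0 <= opnorm ip B := le_trans (hnorm_ge0 ip (B 0)) (Bub 0 h01).
have s0 := s2pos.
have opz : forall zw : R[i] * R[i], cabs zw.1 ^+ 2 + cabs zw.2 ^+ 2 <= 1 ->
    opnorm ip (fun x => zw.1 *: B x + zw.2 *: B x) <= Num.sqrt 2 * opnorm ip B.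
  move=> zw hzw; apply: sup_le_of; first by rewrite mulr_ge0 // ltW.
  move=> x /= hx; apply: (le_trans (elem_bound B x hzw)).
  by apply: ler_wpM2l; [exact: ltW | exact: Bub].
apply/le_anti/andP; split.
  apply: sup_le_of; first by rewrite mulr_ge0 // ltW.
  by move=> zw /= hzw; exact: opz.
set c : R[i] := ((Num.sqrt 2)^-1)%:C.
have hc2 : cabs c ^+ 2 = 2^-1.
  by rewrite /c cabs_real real_normK ?num_real // exprVn sqr_sqrtr.
have hc : cabs (c, c).1 ^+ 2 + cabs (c, c).2 ^+ 2 <= 1.
  by rewrite /= hc2; lra.
have cc : c + c = (Num.sqrt 2)%:C.
  rewrite /c realCD; congr (_%:C).
  apply: (@mulIf _ (Num.sqrt 2)); first by rewrite gt_eqF.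
  by rewrite mulrDl mulVf ?gt_eqF // -expr2 sqr_sqrtr.
have step : Num.sqrt 2 * opnorm ip B <= opnorm ip (fun x => (c, c).1 *: B x + (c, c).2 *: B x).
  rewrite -ler_pdivlMl //.
  apply: (@sup_le_ofE _ _ [set x | hn x <= 1] (fun x => hn (B x)) _ 0 h01).
  move=> x /= hx; rewrite ler_pdivlMl //.
  have -> : Num.sqrt 2 * hn (B x) = hn ((c, c).1 *: B x + (c, c).2 *: B x).
    by rewrite /= -scalerDl (hnormZ hip) cc cabs_real ger0_norm // ltW.
  apply: (@le_sup_of _ _ [set x | hn x <= 1]
     (fun x => hn ((c, c).1 *: B x + (c, c).2 *: B x)) (Num.sqrt 2 * K) x) => //.
  move=> z hz; apply: (le_trans (elem_bound B z hc)).
  by apply: ler_wpM2l; [exact: ltW | exact: hK].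
apply: (le_trans step).
apply: (@le_sup_of _ _ [set zw : R[i] * R[i] | cabs zw.1 ^+ 2 + cabs zw.2 ^+ 2 <= 1]
  (fun zw => opnorm ip (fun x => zw.1 *: B x + zw.2 *: B x)) (Num.sqrt 2 * opnorm ip B) (c, c)) => //.
Qed.
End Om.

End Part3.
Import Part3.

Theorem proposition3p1 (R : realType) (V : lmodType R[i]) (ip : V -> V -> R[i])
  (hH : is_hilbert ip) (T Tstar : V -> V)
  (hT : bounded_op ip T) (hTstar : is_adjoint ip T Tstar) :
  wOmega ip T Tstar = Num.sqrt 2 * numrad ip T.
Proof.
case: hH => hip _.
set W := numrad ip T.
have s0 := s2pos R.
have W0 : 0 <= W := W_ge0 hip hT.
have Ab : forall t x, hnorm ip x <= 1 -> hnorm ip (ReOp T Tstar t x) <= W.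
  move=> t x; rewrite (hnorm_le1 ip) => hx; exact: (A_bound hip hT hTstar t hx).
have OmE : forall t, Omega ip (ReOp T Tstar t) (ReOp T Tstar t)
    = Num.sqrt 2 * opnorm ip (ReOp T Tstar t).
  by move=> t; apply: (Omega_eq hip (Ab t)).
have Omb : forall t, Omega ip (ReOp T Tstar t) (ReOp T Tstar t) <= Num.sqrt 2 * W.
  move=> t; rewrite OmE; apply: ler_wpM2l; first exact: ltW.
  exact: (opA_bound hip hT hTstar t).
apply/le_anti/andP; split.
  apply: sup_le_of; first by rewrite mulr_ge0 // ltW.
  by move=> t _; exact: Omb.
have wO0 : 0 <= wOmega ip T Tstar.
  apply: le_trans _ (@le_sup_of _ _ [set: R]
     (fun t => Omega ip (ReOp T Tstar t) (ReOp T Tstar t)) (Num.sqrt 2 * W) 0 _ I).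
    rewrite OmE mulr_ge0 ?(ltW s0) //.
    apply: le_trans (hnorm_ge0 ip (ReOp T Tstar 0 0)) _.
    apply: (@le_sup_of _ _ [set x | hnorm ip x <= 1]
       (fun x => hnorm ip (ReOp T Tstar 0 x)) W 0 (Ab 0)).
    by rewrite /= (hn0' hip) ler01.
  by move=> t _; exact: Omb.
rewrite -ler_pdivlMl //.
apply: sup_le_of; first by rewrite mulr_ge0 // invr_ge0 ltW.
move=> x /= hx.
have [t ht] := unit_opA hip hT hTstar (hnorm_eq1 hip hx).
apply: (le_trans ht); rewrite ler_pdivlMl // -OmE.
exact: (@le_sup_of _ _ [set: R]
     (fun t => Omega ip (ReOp T Tstar t) (ReOp T Tstar t)) (Num.sqrt 2 * W) t (fun t _ => Omb t) I).
Qed.
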